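(* Let $a,b$ be integers with $0<b<a$, let $S=\langle a,a+1,\ldots,a+b\rangle$ with conductor $c$, and let $m\ge 2c-1$. Let $0=i_0<i_1<\cdots<i_t<i_{t+1}<a+b$ be integers such that $\{m,m+i_1,\ldots,m+i_{t+1}\}$ is amenable. Then $$\mathrm D(m,m+i_1,\ldots,m+i_{t+1})=\mathrm D(m,m+i_1,\ldots,m+i_t)\cup\{m-(ka+r)\mid a-i_{t+1}\le r\le a-1-i_t,\ 0<r-kb\le (a+b)-i_{t+1}\},$$ where $k,r$ range over integers.
   Context: The conductor $c$ of a numerical semigroup $S$ is the least element of $S$ with $c+n\in S$ for all $n\in\mathbb N$. For $x\in S$, $\mathrm D(x)=\{\alpha\in S\mid x-\alpha\in S\}$, and $\mathrm D(x_1,\ldots,x_t)=\mathrm D(x_1)\cup\cdots\cup\mathrm D(x_t)$. A set $M=\{m_1<\cdots<m_s\}\subseteq S$ with $2c-1\le m=m_1$ is amenable if $\mathrm D(m_i)\cap[m,\infty)\subseteq M$ for all $i$. *)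

(* Defs.v *)
From mathcomp Require Import all_boot all_order all_algebra.
Set Implicit Arguments. Unset Strict Implicit. Unset Printing Implicit Defensive.

Definition inS (a b n : nat) : Prop :=
  exists s : seq nat, all (fun g => (a <= g <= a + b)%N) s /\ sumn s = n.

Definition is_conductor (a b c : nat) : Prop :=
  [/\ inS a b c, (forall n, inS a b (c + n)) &
      (forall c', inS a b c' -> (forall n, inS a b (c' + n)) -> (c <= c')%N)].

(* D(x) = { alpha in S | x - alpha in S } (elements of S are naturals). *)
Definition Dset (a b x alpha : nat) : Prop :=
  [/\ inS a b alpha, (alpha <= x)%N & inS a b (x - alpha)].

Definition Dsetl (a b : nat) (xs : seq nat) (alpha : nat) : Prop :=
  exists2 x, x \in xs & Dset a b x alpha.

Definition amenable (a b c : nat) (M : seq nat) : Prop :=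
  exists m, [/\ m \in M, (forall x, x \in M -> (m <= x)%N),
    (2 * c - 1 <= m)%N, (forall x, x \in M -> inS a b x) &
    (forall x alpha, x \in M -> Dset a b x alpha -> (m <= alpha)%N -> alpha \in M)].

(* Main.v *)
Require Import Defs.
From mathcomp Require Import all_boot all_order all_algebra.
Import Order.TTheory GRing.Theory Num.Theory.

From mathcomp Require Import zify.
Lemma inSP a b n : inS a b n <-> exists q, (q*a <= n <= q*(a+b))%N.
Proof.
split.
- case=> s [hs <-]; exists (size s); elim: s hs => [|g s IH] //= /andP[/andP[h1 h2] /IH /andP[h3 h4]].
  rewrite !mulSn; lia.
- case=> q; elim: q n => [|q IH] n.
  + rewrite !mul0n => h; have -> : n = 0 by lia. by exists [::].
  + rewrite !mulSn => h.
    have [s [hs hsum]] := IH (n - minn (a+b) (n - q*a)) ltac:(lia).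
    exists (minn (a+b) (n - q*a) :: s); split => /=.
    * rewrite hs andbT; apply/andP; split; lia.
    * rewrite hsum; lia.
Qed.
Lemma memL m (i : nat -> nat) n x :
  x \in [seq (m + i j)%N | j <- iota 0 n] <-> exists2 j, (j < n)%N & x = (m + i j)%N.
Proof.
split.
- by case/mapP=> j; rewrite mem_iota => /andP[_ h] ->; exists j.
- by case=> j h ->; apply/mapP; exists j => //; rewrite mem_iota.
Qed.

Lemma inS_ge a b c n : is_conductor a b c -> (c <= n)%N -> inS a b n.
Proof. by case=> _ h _ hn; rewrite -(subnKC hn); apply: h. Qed.

Lemma hard (a b c m t : nat) (i : nat -> nat) x :
  (0 < b)%N -> (b < a)%N -> is_conductor a b c -> (2 * c - 1 <= m)%N ->
  i 0%N = 0%N -> (forall j, (j <= t)%N -> (i j < i j.+1)%N) ->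
  (i t.+1 < a + b)%N ->
  amenable a b c [seq (m + i j)%N | j <- iota 0 t.+2] ->
  Dset a b (m + i t.+1) x ->
  (exists2 j, (j <= t)%N & Dset a b (m + i j) x) \/
  (exists q be, [/\ x + be = m + i t.+1, q * a <= be, be < q*a + i t.+1 - i t,
                  q*(a+b) + i t.+1 < be + a + b & be <= q*(a+b)])%N.
Proof.
move=> hb hba hc hm hi0 hinc hit [m0 [hm0 hmin _ hMS hMD]] [hxS hxle hbeS].
have em0 : m0 = m.
  move/memL: hm0 => [j hj ej].
  have : m \in [seq (m + i j)%N | j <- iota 0 t.+2].
    by apply/memL; exists 0%N => //; rewrite hi0 addn0.
  move/hmin; lia.
subst m0.
have hJI := hinc t (leqnn t).
move: hxle hbeS hMD hit hJI.
set I := i t.+1; set J := i t => hxle hbeS hMD hit hJI.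
set be := (m + I - x)%N in hbeS.
have hxbe : (x + be = m + I)%N by rewrite /be; lia.
move/inSP: hbeS => [q /andP[hq1 hq2]].
case: (leqP (q*a + (I - J)) be) => h1.
  left; exists t => //; split => //; first lia.
  apply/inSP; exists q; apply/andP; split; lia.
case: (ltnP (q*(a+b) + I) (be + a + b)) => h2.
  by right; exists q, be; split => //; lia.
case: q hq1 hq2 h1 h2 => [|p]; first by rewrite !mul0n; lia.
have hAB : (p * a <= p * (a+b))%N by rewrite leq_mul2l leq_addr orbT.
rewrite !mulSn => hq1 hq2 h1 h2.
case: (leqP (p*a + I) be) => h3.
  left; exists 0%N => //; rewrite hi0 addn0; split => //; first lia.
  apply/inSP; exists p; apply/andP; split; lia.
set e := maxn a (be - p*(a+b)).
have he1 : (a <= e)%N by rewrite /e; lia.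
have he2 : (e <= I)%N by rewrite /e; lia.
have he3 : (be - p*(a+b) <= e)%N by rewrite /e; lia.
have hyS : inS a b (m + I - e).
  apply: (inS_ge _ _ _ _ hc); lia.
have : (m + I - e)%N \in [seq (m + i j)%N | j <- iota 0 t.+2].
  apply: (hMD (m + I)%N).
  - by apply/memL; exists t.+1.
  - split => //; first lia.
    have -> : (m + I - (m + I - e) = e)%N by lia.
    apply/inSP; exists 1%N; rewrite !mul1n; apply/andP; split; lia.
  - lia.
move/memL=> [j hj ej].
have hjt : (j <= t)%N.
  rewrite ltnS leq_eqVlt in hj; case/orP: hj => [/eqP ejt|]; last by [].
  by move: ej; rewrite ejt -/I; lia.
left; exists j => //; rewrite -ej; split => //; first lia.
apply/inSP; exists p; apply/andP; split; lia.
Qed.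
Lemma easyT (a b c m I J : nat) (k r z : int) :
  (0 < b)%N -> (b < a)%N -> is_conductor a b c -> (2 * c - 1 <= m)%N ->
  (J < I)%N -> (I < a + b)%N ->
  ((Posz a) - Posz I <= r)%R -> (r <= (Posz a) - 1 - Posz J)%R ->
  (0 < r - k * (Posz b))%R -> (r - k * (Posz b) <= Posz (a + b) - Posz I)%R ->
  z = ((Posz m) - (k * (Posz a) + r))%R ->
  exists2 x : nat, z = Posz x & Dset a b (m + I) x.
Proof.
move=> hb hba hc hm hJI hI h1 h2 h3 h4 ->.
case: k h3 h4 => [p|n].
- rewrite -!PoszM => h3 h4.
  case: r h1 h2 h3 h4 => [rn|rn] h1 h2 h3 h4; last by exfalso; lia.
  have hc1 : (p * a + a <= c)%N.
    case: (leqP (p * a + a) c) => // hlt; exfalso.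
    have /inSP [q /andP[hq1 hq2]] := inS_ge _ _ _ (p * a + a - 1)%N hc ltac:(lia).
    case: (leqP q p) => hqp.
      have : (q * (a + b) <= p * (a + b))%N by rewrite leq_mul2r hqp orbT.
      rewrite mulnDr; lia.
    have : (p.+1 * a <= q * a)%N by rewrite leq_mul2r hqp orbT.
    rewrite mulSn; lia.
  exists (m - (p * a + rn))%N.
    rewrite -PoszD; lia.
  split.
  + apply: (inS_ge _ _ _ _ hc); lia.
  + lia.
  + apply/inSP; exists p.+1; rewrite !mulSn mulnDr; apply/andP; split; lia.
- case: n => [|n].
  + rewrite NegzE mulNr mul1r => h3 h4.
    exists (m + I)%N.
      lia.
    split; [apply: (inS_ge _ _ _ _ hc); lia | lia | ].
    by rewrite subnn; exists [::].
  + rewrite NegzE mulNr -PoszM mulSn mulSn => h3 h4; exfalso; lia.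
Qed.

Theorem lemma4p4 (a b c m t : nat) (i : nat -> nat) :
  (0 < b)%N -> (b < a)%N ->
  is_conductor a b c ->
  (2 * c - 1 <= m)%N ->
  i 0%N = 0%N ->
  (forall j, (j <= t)%N -> (i j < i j.+1)%N) ->
  (i t.+1 < a + b)%N ->
  amenable a b c [seq (m + i j)%N | j <- iota 0 t.+2] ->
  forall z : int,
    (exists2 x : nat, z = (Posz x) & Dsetl a b [seq (m + i j)%N | j <- iota 0 t.+2] x)
    <->
    ((exists2 x : nat, z = (Posz x) & Dsetl a b [seq (m + i j)%N | j <- iota 0 t.+1] x)
     \/ exists k r : int,
          [/\ ((Posz a) - Posz (i t.+1) <= r)%R, (r <= (Posz a) - 1 - Posz (i t))%R,
              (0 < r - k * (Posz b))%R, (r - k * (Posz b) <= Posz (a + b) - Posz (i t.+1))%R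
            & z = ((Posz m) - (k * (Posz a) + r))%R]).
Proof.
move=> hb hba hc hm hi0 hinc hit ham z; split.
- case=> x -> [y /memL [j hj ->] hD].
  case: (ltnP j t.+1) => hj'.
    by left; exists x => //; exists (m + i j)%N => //; apply/memL; exists j.
  have ej : j = t.+1 by lia.
  subst j.
  case: (hard _ _ _ _ _ _ _ hb hba hc hm hi0 hinc hit ham hD).
    case=> j hjt hD'; left; exists x => //; exists (m + i j)%N => //.
    by apply/memL; exists j.
  case=> q [be [e1 e2 e3 e4 e5]]; right.
  have hJI := hinc t (leqnn t).
  exists (Posz q - 1)%R, (Posz be - Posz (q * a) + Posz a - Posz (i t.+1))%R.
  rewrite mulrBl mul1r -!PoszM.
  rewrite mulnDr in e4 e5.
  split; clear ham hinc hc hm hi0; lia.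
- case.
    case=> x -> [y /memL [j hj ->] hD]; exists x => //; exists (m + i j)%N => //.
    by apply/memL; exists j => //; lia.
  case=> k [r [h1 h2 h3 h4 ez]].
  have hJI := hinc t (leqnn t).
  have [x -> hD] := easyT _ _ _ _ _ _ _ _ _ hb hba hc hm hJI hit h1 h2 h3 h4 ez.
  exists x => //; exists (m + i t.+1)%N => //; apply/memL; by exists t.+1.
Qed.
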